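(* Let $\phi=\frac{1+\sqrt5}{2}$, let $\Gamma\subset SL_2(\mathbb R)$ be the group generated by $$\sigma_0=\begin{pmatrix}1&\phi\\0&1\end{pmatrix},\quad \sigma_1=\begin{pmatrix}\phi&\phi\\1&\phi\end{pmatrix},\quad \sigma_2=\begin{pmatrix}\phi&1\\\phi&\phi\end{pmatrix},\quad \sigma_3=\begin{pmatrix}1&0\\\phi&1\end{pmatrix},$$ and let $S=\{\gamma\binom{1}{0}:\gamma\in\Gamma\}$. Let $v_1,v_2\in S$ be distinct, write $v_1-v_2=\binom{x}{y}$, and let $\lambda=\gcd_{\Gamma^+}(x,y)$. Then there are two points of $S$ lying on a common horizontal line at distance exactly $\lambda$ from each other.
   Context: $S\subset\mathbb Z[\phi]^2$. For $x,y\in\mathbb Z[\phi]$ not both zero, $\gcd_{\Gamma^+}(x,y)$ denotes the positive real number $\lambda$ such that $\lambda^{-1}\binom{|x|}{|y|}\in S$ (it is known, from the Davis–Lelièvre gcd algorithm for $\mathbb Z[\phi]$, that such $\lambda$ exists and is unique; it is the representative of the gcd of $|x|,|y|$ produced by that algorithm). $\Gamma$ acts on $\mathbb R^2$ by matrix multiplication on column vectors. *)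

(* Defs.v *)
From Stdlib Require Import Reals.
Open Scope R_scope.

Definition phi : R := (1 + sqrt 5) / 2.

Record mat2 := Mat2 { m11 : R; m12 : R; m21 : R; m22 : R }.

Definition mmul (A B : mat2) : mat2 :=
  Mat2 (m11 A * m11 B + m12 A * m21 B) (m11 A * m12 B + m12 A * m22 B)
       (m21 A * m11 B + m22 A * m21 B) (m21 A * m12 B + m22 A * m22 B).

Definition mapply (A : mat2) (v : R * R) : R * R :=
  (m11 A * fst v + m12 A * snd v, m21 A * fst v + m22 A * snd v).

Definition mid : mat2 := Mat2 1 0 0 1.

(* inverse of a determinant-one matrix *)
Definition minv (A : mat2) : mat2 := Mat2 (m22 A) (- m12 A) (- m21 A) (m11 A).

Definition sigma0 : mat2 := Mat2 1 phi 0 1.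
Definition sigma1 : mat2 := Mat2 phi phi 1 phi.
Definition sigma2 : mat2 := Mat2 phi 1 phi phi.
Definition sigma3 : mat2 := Mat2 1 0 phi 1.

Definition is_generator (s : mat2) : Prop :=
  s = sigma0 \/ s = sigma1 \/ s = sigma2 \/ s = sigma3.

Inductive Gamma : mat2 -> Prop :=
  | Gamma_id : Gamma mid
  | Gamma_gen : forall s g, is_generator s -> Gamma g -> Gamma (mmul s g)
  | Gamma_geninv : forall s g, is_generator s -> Gamma g -> Gamma (mmul (minv s) g).

Definition S (v : R * R) : Prop := exists g, Gamma g /\ v = mapply g (1, 0).

(* lam is gcd_{Gamma^+}(x,y): the positive real with lam^{-1}(|x|,|y|) in S. *)
Definition is_gcdGamma (x y lam : R) : Prop :=
  0 < lam /\ S (Rabs x / lam, Rabs y / lam).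

(* Main.v *)
Require Import Defs.
From Stdlib Require Import Reals Lra Psatz.
Open Scope R_scope.

Lemma phi_sq : phi * phi = phi + 1.
Proof.
  unfold phi. assert (H := sqrt_sqrt 5 ltac:(lra)). nra.
Qed.

Lemma mat_eq a b c d a' b' c' d' :
  a = a' -> b = b' -> c = c' -> d = d' -> Mat2 a b c d = Mat2 a' b' c' d'.
Proof. intros; subst; reflexivity. Qed.

Lemma mmul_assoc A B C : mmul A (mmul B C) = mmul (mmul A B) C.
Proof. destruct A, B, C; unfold mmul; simpl; apply mat_eq; ring. Qed.

Lemma mmul_id_r A : mmul A mid = A.
Proof. destruct A; unfold mmul, mid; simpl; apply mat_eq; ring. Qed.

Lemma minv_mmul A B : minv (mmul A B) = mmul (minv B) (minv A).
Proof. destruct A, B; unfold mmul, minv; simpl; apply mat_eq; ring. Qed.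

Lemma minv_minv A : minv (minv A) = A.
Proof. destruct A; unfold minv; simpl; apply mat_eq; ring. Qed.

Lemma Gamma_mul a b : Gamma a -> Gamma b -> Gamma (mmul a b).
Proof.
  intros Ha Hb; induction Ha.
  - replace (mmul mid b) with b; [assumption|].
    destruct b; unfold mmul, mid; simpl; apply mat_eq; ring.
  - rewrite <- mmul_assoc; constructor; auto.
  - rewrite <- mmul_assoc; apply Gamma_geninv; auto.
Qed.

Lemma Gamma_inv g : Gamma g -> Gamma (minv g).
Proof.
  intros H; induction H.
  - replace (minv mid) with mid by (unfold minv, mid; simpl; apply mat_eq; ring).
    constructor.
  - rewrite minv_mmul. apply Gamma_mul; auto.
    rewrite <- (mmul_id_r (minv s)). apply Gamma_geninv; auto; constructor.
  - rewrite minv_mmul, minv_minv. apply Gamma_mul; auto.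
    rewrite <- (mmul_id_r s). apply Gamma_gen; auto; constructor.
Qed.

Definition conjD (A : mat2) : mat2 := Mat2 (m11 A) (- m12 A) (- m21 A) (m22 A).

Lemma conjD_mmul A B : conjD (mmul A B) = mmul (conjD A) (conjD B).
Proof. destruct A, B; unfold mmul, conjD; simpl; apply mat_eq; ring. Qed.

Lemma conjD_gen s : is_generator s -> conjD s = minv s.
Proof.
  intros [H|[H|[H|H]]]; subst; unfold conjD, minv; simpl; apply mat_eq; ring.
Qed.

Lemma conjD_geninv s : is_generator s -> conjD (minv s) = s.
Proof.
  intros [H|[H|[H|H]]]; subst; unfold conjD, minv; simpl; apply mat_eq; ring.
Qed.

Lemma Gamma_conjD g : Gamma g -> Gamma (conjD g).
Proof.
  intros H; induction H.
  - replace (conjD mid) with mid by (unfold conjD, mid; simpl; apply mat_eq; ring).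
    constructor.
  - rewrite conjD_mmul, conjD_gen by auto. apply Gamma_geninv; auto.
  - rewrite conjD_mmul, conjD_geninv by auto. apply Gamma_gen; auto.
Qed.

Lemma Gamma_det g : Gamma g -> m11 g * m22 g - m12 g * m21 g = 1.
Proof.
  intros H; induction H.
  - simpl; ring.
  - destruct g; simpl in *.
    destruct H as [H|[H|[H|H]]]; subst; simpl; try nra;
      pose proof phi_sq; nra.
  - destruct g; simpl in *.
    destruct H as [H|[H|[H|H]]]; subst; simpl; try nra;
      pose proof phi_sq; nra.
Qed.

Lemma S_closed h v : Gamma h -> S v -> S (mapply h v).
Proof.
  intros Hh [g [G E]]. exists (mmul h g). split.
  - apply Gamma_mul; auto.
  - subst; destruct h, g; unfold mapply, mmul; simpl; f_equal; ring.
Qed.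

Theorem lemma3p3 :
  forall v1 v2 : R * R, S v1 -> S v2 -> v1 <> v2 ->
  forall lam : R, is_gcdGamma (fst v1 - fst v2) (snd v1 - snd v2) lam ->
  exists p q : R * R, S p /\ S q /\ snd p = snd q /\ Rabs (fst p - fst q) = lam.
Proof.
  intros v1 v2 S1 S2 _ lam [Hl [g [G E]]].
  pose proof (Gamma_det g G) as Hdet.
  pose proof (Gamma_inv g G) as Gi.
  pose proof (Gamma_conjD _ Gi) as Gci.
  destruct v1 as [x1 y1], v2 as [x2 y2].
  destruct g as [a b c d]; simpl in *.
  injection E; clear E; intros Ec Ea.
  assert (Ha : Rabs (x1 - x2) = lam * a) by (replace a with (a * 1 + b * 0) by ring; rewrite <- Ea; field; lra).
  assert (Hc : Rabs (y1 - y2) = lam * c) by (replace c with (c * 1 + d * 0) by ring; rewrite <- Ec; field; lra).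
  clear Ea Ec.
  destruct (Rle_dec 0 (x1 - x2)) as [Px|Px];
  destruct (Rle_dec 0 (y1 - y2)) as [Py|Py].
  - rewrite Rabs_right in Ha by lra. rewrite Rabs_right in Hc by lra.
    exists (mapply (minv (Mat2 a b c d)) (x1, y1)), (mapply (minv (Mat2 a b c d)) (x2, y2)).
    split; [apply S_closed; auto|]. split; [apply S_closed; auto|].
    unfold mapply, minv; simpl. split; [nra|].
    replace (d * x1 + - b * y1 - (d * x2 + - b * y2)) with lam by nra.
    apply Rabs_right; lra.
  - rewrite Rabs_right in Ha by lra. rewrite Rabs_left in Hc by lra.
    exists (mapply (conjD (minv (Mat2 a b c d))) (x1, y1)), (mapply (conjD (minv (Mat2 a b c d))) (x2, y2)).
    split; [apply S_closed; auto|]. split; [apply S_closed; auto|].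
    unfold mapply, minv, conjD; simpl. split; [nra|].
    replace (d * x1 + - - b * y1 - (d * x2 + - - b * y2)) with lam by nra.
    apply Rabs_right; lra.
  - rewrite Rabs_left in Ha by lra. rewrite Rabs_right in Hc by lra.
    exists (mapply (conjD (minv (Mat2 a b c d))) (x1, y1)), (mapply (conjD (minv (Mat2 a b c d))) (x2, y2)).
    split; [apply S_closed; auto|]. split; [apply S_closed; auto|].
    unfold mapply, minv, conjD; simpl. split; [nra|].
    replace (d * x1 + - - b * y1 - (d * x2 + - - b * y2)) with (- lam) by nra.
    rewrite Rabs_Ropp; apply Rabs_right; lra.
  - rewrite Rabs_left in Ha by lra. rewrite Rabs_left in Hc by lra.
    exists (mapply (minv (Mat2 a b c d)) (x1, y1)), (mapply (minv (Mat2 a b c d)) (x2, y2)).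
    split; [apply S_closed; auto|]. split; [apply S_closed; auto|].
    unfold mapply, minv; simpl. split; [nra|].
    replace (d * x1 + - b * y1 - (d * x2 + - b * y2)) with (- lam) by nra.
    rewrite Rabs_Ropp; apply Rabs_right; lra.
Qed.
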